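(* Let $A$ be a Malcev algebra with Jacobian ideal $J$ and $J$-nucleus $N$, with $A=N\oplus J$ and $i:A/J\to N$ the induced isomorphism. If $\overline{\mathfrak{a}}$ and $\overline{\mathfrak{b}}$ are co-prime $i$-ideals of $N$, then their product $\overline{\mathfrak{a}}\overline{\mathfrak{b}}$ is an $i$-ideal of $N$.
   Context: A Malcev algebra $A$ over a field $k$ is a nonassociative $k$-algebra with bilinear product $[\cdot,\cdot]$ satisfying $[a,a]=0$ and $[J(a,b,c),a]=J(a,b,[a,c])$ for all $a,b,c\in A$, where $J(x,y,z)=[[x,y],z]+[[y,z],x]+[[z,x],y]$. $J=J(A,A,A)$ is the span of all Jacobians; the $J$-nucleus is $N=\{x\in A: J(x,A,A)=0\}$, a Lie algebra. When $A=N\oplus J$, $i:A/J\to N$ is the induced isomorphism. A subset $X$ of $N$ is an $i$-ideal of $N$ if $i(n)X\subseteq X$ for every $n\in A/J$ (products taken in $N$). Two $i$-ideals $\overline{\mathfrak{a}},\overline{\mathfrak{b}}$ are co-prime if $\overline{\mathfrak{a}}+\overline{\mathfrak{b}}=N$. The product $\overline{\mathfrak{a}}\overline{\mathfrak{b}}$ is the span of all $[x,y]$, $x\in\overline{\mathfrak{a}}$, $y\in\overline{\mathfrak{b}}$. *)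

(* Defs.v *)
From HB Require Import structures.
From mathcomp Require Import all_boot all_algebra.
Set Implicit Arguments. Unset Strict Implicit. Unset Printing Implicit Defensive.
Import GRing.Theory.
Local Open Scope ring_scope.

Section Malcev.
Variables (k : fieldType) (A : lmodType k).
Implicit Types (br : A -> A -> A) (S X Y N J : A -> Prop).

Definition bilinear_br br : Prop :=
  (forall (r : k) a b c, br (r *: a + b) c = r *: br a c + br b c) /\
  (forall (r : k) a b c, br a (r *: b + c) = r *: br a b + br a c).

Definition jacobian br x y z : A :=
  br (br x y) z + br (br y z) x + br (br z x) y.

Definition malcev br : Prop :=
  [/\ bilinear_br br,
      (forall a, br a a = 0) &
      (forall a b c, br (jacobian br a b c) a = jacobian br a b (br a c))].

Definition span S : A -> Prop := fun x =>
  exists (s : seq A) (c : seq k),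
    (forall i : 'I_(size s), S (nth 0 s i)) /\
    x = \sum_(i < size s) (nth 0 c i) *: (nth 0 s i).

Definition jacobian_ideal br : A -> Prop :=
  span (fun x => exists a b c, x = jacobian br a b c).

Definition J_nucleus br : A -> Prop :=
  fun x => forall y z, jacobian br x y z = 0.

Definition direct_sum N J : Prop :=
  (forall a, exists n j, [/\ N n, J j & a = n + j]) /\
  (forall x, N x -> J x -> x = 0).

(* X is an i-ideal of N: X ⊆ N and i(n) X ⊆ X for every n ∈ A/J.
   For the coset a + J, i(a + J) is the unique n ∈ N with a - n ∈ J. *)
Definition i_ideal br N J X : Prop :=
  (forall x, X x -> N x) /\
  (forall a n, N n -> J (a - n) -> forall x, X x -> X (br n x)).

Definition coprime_ideals N X Y : Prop :=
  forall z, N z <-> exists x y, [/\ X x, Y y & z = x + y].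

Definition ideal_prod br X Y : A -> Prop :=
  span (fun z => exists x y, [/\ X x, Y y & z = br x y]).

End Malcev.

(* Main.v *)
Require Import Defs.
From mathcomp Require Import all_boot all_algebra.
Import GRing.Theory.
Local Open Scope ring_scope.
Set Implicit Arguments. Unset Strict Implicit.

Section H.
Variables (k : fieldType) (A : lmodType k) (br : A -> A -> A).
Hypothesis bil : bilinear_br br.

Lemma brDl x y z : br (x + y) z = br x z + br y z.
Proof. by have := (proj1 bil) 1 x y z; rewrite !scale1r. Qed.
Lemma brDr x y z : br z (x + y) = br z x + br z y.
Proof. by have := (proj2 bil) 1 z x y; rewrite !scale1r. Qed.
Lemma br0l z : br 0 z = 0.
Proof. have := brDl 0 0 z; rewrite addr0 -{1}[br 0 z]addr0 => /addrI; done. Qed.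
Lemma br0r z : br z 0 = 0.
Proof. have := brDr 0 0 z; rewrite addr0 -{1}[br z 0]addr0 => /addrI; done. Qed.
Lemma brZl r x z : br (r *: x) z = r *: br x z.
Proof. by have := (proj1 bil) r x 0 z; rewrite !addr0 br0l addr0. Qed.
Lemma brZr r x z : br z (r *: x) = r *: br z x.
Proof. by have := (proj2 bil) r z x 0; rewrite !addr0 br0r addr0. Qed.
Lemma brNr x z : br z (- x) = - br z x.
Proof. by rewrite -scaleN1r brZr scaleN1r. Qed.
Lemma brNl x z : br (- x) z = - br x z.
Proof. by rewrite -scaleN1r brZl scaleN1r. Qed.

Lemma anti (alt : forall a, br a a = 0) u v : br u v = - br v u.
Proof.
have := alt (u + v); rewrite brDl !brDr !alt add0r addr0 => /eqP.
by rewrite addr_eq0 => /eqP.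
Qed.

Lemma jacD r x y u v :
  jacobian br (r *: x + y) u v = r *: jacobian br x u v + jacobian br y u v.
Proof.
rewrite /jacobian !brDl !brZl !brDr !brZr !brDl !brZl !scalerDr.
set X1 := br (br x u) v; set X2 := br (br u v) x; set X3 := br (br v x) u.
set Y1 := br (br y u) v; set Y2 := br (br u v) y; set Y3 := br (br v y) u.
by rewrite [_ + (r *: X2 + Y2)]addrACA [LHS]addrACA.
Qed.
End H.

Section S.
Variables (k : fieldType) (A : lmodType k).
Implicit Types S : A -> Prop.

Lemma span0 S : Defs.span S 0.
Proof. by exists [::], [::]; split => [[]//|]; rewrite big_ord0. Qed.

Lemma span_cons S r g w : S g -> Defs.span S w -> Defs.span S (r *: g + w).
Proof.
move=> Sg [s [c [Hs ->]]]; exists (g :: s), (r :: c); split.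
  case=> [[|i]] Hi //=; have Hi' : (i < size s)%N by [].
  exact: (Hs (Ordinal Hi')).
by rewrite big_ord_recl /=.
Qed.

Lemma span_ind S (P : A -> Prop) : P 0 ->
  (forall r g y, S g -> P y -> P (r *: g + y)) -> forall x, Defs.span S x -> P x.
Proof.
move=> P0 PS x [s [c [Hs ->]]]; elim: s c Hs => [|g s IH] c Hs.
  by rewrite big_ord0.
rewrite big_ord_recl /=.
have -> : \sum_(i < size s) nth 0 c (bump 0 i) *: nth 0 s i
        = \sum_(i < size s) nth 0 (behead c) i *: nth 0 s i.
  by apply: eq_bigr => i _; rewrite nth_behead.
apply: PS; first by apply: (Hs ord0).
apply: IH => i; have := Hs (lift ord0 i); by [].
Qed.

Lemma span_lin S r u v : Defs.span S u -> Defs.span S v -> Defs.span S (r *: u + v).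
Proof.
move=> Su Sv; move: u Su r; apply: span_ind.
  by move=> r; rewrite scaler0 add0r.
move=> r' g y Sg IH r; rewrite scalerDr scalerA -addrA.
by apply: span_cons.
Qed.
End S.

Theorem lemma3p10 (k : fieldType) (A : lmodType k) (br : A -> A -> A)
  (a b : A -> Prop) :
  malcev br ->
  direct_sum (J_nucleus br) (jacobian_ideal br) ->
  i_ideal br (J_nucleus br) (jacobian_ideal br) a ->
  i_ideal br (J_nucleus br) (jacobian_ideal br) b ->
  coprime_ideals (J_nucleus br) a b ->
  i_ideal br (J_nucleus br) (jacobian_ideal br) (ideal_prod br a b).
Proof.
move=> [bil alt _] _ [aN aI] [bN bI] _.
have J0 : forall n, jacobian_ideal br (n - n) by move=> n; rewrite subrr; apply: span0.
split.
  apply: span_ind.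
    by move=> y z; rewrite /jacobian !(br0l bil) !(br0r bil) !(br0l bil) !addr0.
  move=> r g y [x [z [ax bz ->]]] Ny u v.
  rewrite (jacD bil) Ny addr0.
  by rewrite (bN _ (bI x x (aN _ ax) (J0 x) _ bz)) scaler0.
move=> a0 n Nn _; apply: span_ind.
  by rewrite (br0r bil); apply: span0.
move=> r g y [x [z [ax bz ->]]] IH.
rewrite (brDr bil) (brZr bil); apply: span_lin => //.
have -> : br n (br x z) = 1 *: br (br n x) z + (1 *: br x (br n z) + 0).
  rewrite !scale1r addr0.
  have := Nn x z; rewrite /jacobian => /eqP; rewrite -addrA addrC addr_eq0 => /eqP E.
  rewrite (anti bil alt n (br x z)) (anti bil alt x (br n z)) (anti bil alt n z) (brNl bil) opprK.
  by rewrite -[RHS]opprK; congr (- _); rewrite opprD -E addrK.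
apply: span_cons; first by exists (br n x), z; split => //; apply: aI (J0 n) _ ax.
apply: span_cons; last by apply: span0.
by exists x, (br n z); split => //; apply: bI (J0 n) _ bz.
Qed.
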